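(* Let $\mathcal A\in\mathbb Q^{n\times n\times n_3}$. Then $\mathtt{bcirc_z}(\mathcal A^k)=\mathtt{bcirc_z}(\mathcal A)^k$ for every positive integer $k$. If moreover $\mathcal A$ is invertible, then $\mathtt{bcirc_z}(\mathcal A^{-1})=\mathtt{bcirc_z}(\mathcal A)^{-1}$.
   Context: $\mathbb Q$ denotes the real quaternions $a_0+a_1\mathbf i+a_2\mathbf j+a_3\mathbf k$ with the usual Hamilton multiplication; $\mathbb C$ is identified with $\{a_0+a_1\mathbf i\}$. Every quaternion array $A=A_0+A_1\mathbf i+A_2\mathbf j+A_3\mathbf k$ (real $A_t$) is written uniquely as $A=A_{\mathbf d}+\mathbf jA_{\mathbf c}$ with $A_{\mathbf d}=A_0+A_1\mathbf i$, $A_{\mathbf c}=A_2-A_3\mathbf i$ complex. For $\mathcal A\in\mathbb Q^{n_1\times n_2\times n_3}$, $\mathcal A^{(s)}=\mathcal A(:,:,s)$. For a complex tensor $\mathcal C$, $\mathtt{bcirc}(\mathcal C)$ is the $n_1n_3\times n_2n_3$ block circulant matrix with $(p,q)$ block $\mathcal C^{(((p-q)\bmod n_3)+1)}$. $P_{n_3}$ is the permutation matrix with first row $e_1^T$ and $r$-th row $e_{n_3+2-r}^T$ for $r\ge2$. $\mathtt{bcirc_z}(\mathcal A)=\mathtt{bcirc}(\mathcal A_{\mathbf d})+\mathbf j\,\mathtt{bcirc}(\mathcal A_{\mathbf c})(P_{n_3}\otimes I_{n_2})$. $\mathtt{unfold}(\mathcal B)=[\mathcal B^{(1)};\dots;\mathcal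 B^{(n_3)}]$, $\mathtt{fold}$ its inverse. QT-product: $\mathcal A*_Q\mathcal B=\mathtt{fold}(\mathtt{bcirc_z}(\mathcal A)\,\mathtt{unfold}(\mathcal B))$. The identity tensor $\mathcal I\in\mathbb Q^{n\times n\times n_3}$ has first frontal slice $I_n$ and all other frontal slices zero. Powers: $\mathcal A^1=\mathcal A$, $\mathcal A^{k+1}=\mathcal A*_Q\mathcal A^k$. $\mathcal A$ is invertible if there is $\mathcal A^{-1}$ with $\mathcal A*_Q\mathcal A^{-1}=\mathcal A^{-1}*_Q\mathcal A=\mathcal I$. *)

(* Defs.v *)
From HB Require Import structures.
From mathcomp Require Import all_boot all_order all_algebra.
From mathcomp Require Import ring.
From mathcomp Require Import reals.
Set Implicit Arguments. Unset Strict Implicit. Unset Printing Implicit Defensive.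
Import Order.TTheory GRing.Theory Num.Theory.
Local Open Scope ring_scope.

Record quat (R : Type) := Quat { q0 : R; q1 : R; q2 : R; q3 : R }.
Arguments Quat {R}.

Section QuatEqChoice.
Variable R : Type.
Definition seq_of_quat (x : quat R) := [:: q0 x; q1 x; q2 x; q3 x].
Definition quat_of_seq (s : seq R) :=
  if s is [:: a; b; c; d] then Some (Quat a b c d) else None.
Lemma seq_of_quatK : pcancel seq_of_quat quat_of_seq. Proof. by case. Qed.
End QuatEqChoice.

HB.instance Definition _ (R : eqType) := Equality.copy (quat R)
  (pcan_type (@seq_of_quatK R)).
HB.instance Definition _ (R : choiceType) := Choice.copy (quat R)
  (pcan_type (@seq_of_quatK R)).

Section QuatRing.
Variable R : comNzRingType.
Implicit Types x y z : quat R.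

Definition qadd x y := Quat (q0 x + q0 y) (q1 x + q1 y) (q2 x + q2 y) (q3 x + q3 y).
Definition qopp x := Quat (- q0 x) (- q1 x) (- q2 x) (- q3 x).
Definition qzero : quat R := Quat 0 0 0 0.
Definition qone : quat R := Quat 1 0 0 0.
(* Hamilton product: i^2 = j^2 = k^2 = ijk = -1 *)
Definition qmul x y := Quat
  (q0 x * q0 y - q1 x * q1 y - q2 x * q2 y - q3 x * q3 y)
  (q0 x * q1 y + q1 x * q0 y + q2 x * q3 y - q3 x * q2 y)
  (q0 x * q2 y - q1 x * q3 y + q2 x * q0 y + q3 x * q1 y)
  (q0 x * q3 y + q1 x * q2 y - q2 x * q1 y + q3 x * q0 y).

Lemma qaddA : associative qadd.
Proof. by move=> [a b c d] [e f g h] [k l m n]; rewrite /qadd /= !addrA. Qed.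
Lemma qaddC : commutative qadd.
Proof. by move=> [a b c d] [e f g h]; rewrite /qadd /= [a + _]addrC [b + _]addrC [c + _]addrC [d + _]addrC. Qed.
Lemma qadd0 : left_id qzero qadd.
Proof. by move=> [a b c d]; rewrite /qadd /= !add0r. Qed.
Lemma qaddN : left_inverse qzero qopp qadd.
Proof. by move=> [a b c d]; rewrite /qadd /= !addNr. Qed.

HB.instance Definition _ := GRing.isZmodule.Build (quat R) qaddA qaddC qadd0 qaddN.

Lemma qmulA : associative qmul.
Proof. by move=> [a b c d] [e f g h] [k l m n]; rewrite /qmul /=; congr Quat; ring. Qed.
Lemma qmul1 : left_id qone qmul.
Proof. by move=> [a b c d]; rewrite /qmul /=; congr Quat; ring. Qed.
Lemma qmulr1 : right_id qone qmul.
Proof. by move=> [a b c d]; rewrite /qmul /=; congr Quat; ring. Qed.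
Lemma qmulDl : left_distributive qmul qadd.
Proof. by move=> [a b c d] [e f g h] [k l m n]; rewrite /qmul /qadd /=; congr Quat; ring. Qed.
Lemma qmulDr : right_distributive qmul qadd.
Proof. by move=> [a b c d] [e f g h] [k l m n]; rewrite /qmul /qadd /=; congr Quat; ring. Qed.
Lemma qone_neq0 : qone != qzero.
Proof. by apply/eqP => -[] /eqP; rewrite oner_eq0. Qed.

HB.instance Definition _ := GRing.Zmodule_isNzRing.Build (quat R)
  qmulA qmul1 qmulr1 qmulDl qmulDr qone_neq0.

Definition qi : quat R := Quat 0 1 0 0.
Definition qj : quat R := Quat 0 0 1 0.
Definition qk : quat R := Quat 0 0 0 1.
End QuatRing.

(* A tensor in Q^{n1 x n2 x n3} is given by its n3 frontal slices;
   slice s (0-based) is A^{(s+1)} in the paper. *)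
Definition qtensor (R : comNzRingType) (n1 n2 n3 : nat) :=
  {ffun 'I_n3 -> 'M[quat R]_(n1, n2)}.

Section Tensors.
Variable R : comNzRingType.

(* Row-major decomposition of an index of 'I_(m * n) into a pair
   (block index, index inside the block); inverse of mxvec_index. *)
Definition blk m n (r : 'I_(m * n)) : 'I_m * 'I_n :=
  enum_val (cast_ord (esym (mxvec_cast m n)) r).

(* A = A_d + j A_c with A_d = A0 + A1 i, A_c = A2 - A3 i (complex numbers
   identified with the quaternions a0 + a1 i). *)
Definition qd (x : quat R) : quat R := Quat (q0 x) (q1 x) 0 0.
Definition qc (x : quat R) : quat R := Quat (q2 x) (- q3 x) 0 0.

Definition tmap n1 n2 n3 (f : quat R -> quat R) (A : qtensor R n1 n2 n3)
  : qtensor R n1 n2 n3 := [ffun s => map_mx f (A s)].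
Definition tpart_d n1 n2 n3 (A : qtensor R n1 n2 n3) := tmap qd A.
Definition tpart_c n1 n2 n3 (A : qtensor R n1 n2 n3) := tmap qc A.

Definition bcirc n1 n2 n3 (C : qtensor R n1 n2 n3) : 'M[quat R]_(n3 * n1, n3 * n2) :=
  \matrix_(r, c)
    let p := (blk r).1 in let q := (blk c).1 in
    C (insubd p ((p + n3 - q) %% n3)%N) (blk r).2 (blk c).2.

Definition kron m1 n1 m2 n2 (A : 'M[quat R]_(m1, n1)) (B : 'M[quat R]_(m2, n2))
  : 'M[quat R]_(m1 * m2, n1 * n2) :=
  \matrix_(r, c) (A (blk r).1 (blk c).1 * B (blk r).2 (blk c).2).

(* P_{n3}: first row e_1^T, r-th row (r >= 2) e_{n3+2-r}^T; 0-based: row r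
   has its 1 in column (n3 - r) mod n3. *)
Definition Pperm n3 : 'M[quat R]_n3 :=
  \matrix_(r, c) (((c : nat) == ((n3 - r) %% n3)%N)%:R).

Definition bcirc_z n1 n2 n3 (A : qtensor R n1 n2 n3) : 'M[quat R]_(n3 * n1, n3 * n2) :=
  bcirc (tpart_d A) + qj R *: (bcirc (tpart_c A) *m kron (Pperm n3) (1%:M : 'M_n2)).

Definition tunfold n1 n2 n3 (B : qtensor R n1 n2 n3) : 'M[quat R]_(n3 * n1, n2) :=
  \matrix_(r, c) B (blk r).1 (blk r).2 c.

Definition tfold n1 n2 n3 (M : 'M[quat R]_(n3 * n1, n2)) : qtensor R n1 n2 n3 :=
  [ffun s => \matrix_(i, c) M (mxvec_index s i) c].

Definition qtprod n1 n2 m n3 (A : qtensor R n1 n2 n3) (B : qtensor R n2 m n3)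
  : qtensor R n1 m n3 := tfold (bcirc_z A *m tunfold B).

Definition qtid n n3 : qtensor R n n n3 :=
  [ffun s : 'I_n3 => if (s : nat) == 0%N then 1%:M else 0].

(* qtpow_ A k = A^(k+1):  A^1 = A, A^(k+1) = A *_Q A^k *)
Fixpoint qtpow_ n n3 (A : qtensor R n n n3) (k : nat) : qtensor R n n n3 :=
  if k is k'.+1 then qtprod A (qtpow_ A k') else A.
(* A^k for k >= 1 *)
Definition qtpow n n3 (A : qtensor R n n n3) (k : nat) := qtpow_ A k.-1.

Definition qt_invertible n n3 (A : qtensor R n n n3) :=
  exists B : qtensor R n n n3, qtprod A B = qtid n n3 /\ qtprod B A = qtid n n3.
End Tensors.

(* Main.v *)
Require Import Defs.
From HB Require Import structures.
From mathcomp Require Import all_boot all_order all_algebra ring.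
From mathcomp Require Import reals.
Set Implicit Arguments. Unset Strict Implicit. Unset Printing Implicit Defensive.
Import GRing.Theory.
Local Open Scope ring_scope.

Section S.
Variable R : comNzRingType.

Lemma blk_mxvec m n (i : 'I_m) (j : 'I_n) : blk (mxvec_index i j) = (i, j).
Proof. by rewrite /blk /mxvec_index cast_ordK enum_rankK. Qed.

Lemma blk1 m n (i : 'I_m) (j : 'I_n) : (blk (mxvec_index i j)).1 = i.
Proof. by rewrite blk_mxvec. Qed.
Lemma blk2 m n (i : 'I_m) (j : 'I_n) : (blk (mxvec_index i j)).2 = j.
Proof. by rewrite blk_mxvec. Qed.

Lemma mxvec_blk m n (r : 'I_(m * n)) : mxvec_index (blk r).1 (blk r).2 = r.
Proof. by case/mxvec_indexP: r => i j; rewrite blk_mxvec. Qed.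

Lemma sum_blk m n (F : 'I_(m * n) -> quat R) :
  \sum_t F t = \sum_(r < m) \sum_(k < n) F (mxvec_index r k).
Proof.
rewrite pair_big /=.
rewrite (reindex (fun pr : 'I_m * 'I_n => mxvec_index pr.1 pr.2)) /=; last first.
  by apply: onW_bij; exists (fun t => blk t) => [[i j]|t]; rewrite ?blk_mxvec // mxvec_blk.
by apply: eq_bigr => -[i j].
Qed.

Lemma mx_blkP m n1 n2 (M N : 'M[quat R]_(m * n1, m * n2)) :
  (forall p i q l, M (mxvec_index p i) (mxvec_index q l) = N (mxvec_index p i) (mxvec_index q l)) -> M = N.
Proof. by move=> H; apply/matrixP => r c; rewrite -(mxvec_blk r) -(mxvec_blk c). Qed.

Lemma val_subZp m (p q : 'I_m.+1) : val (p - q) = ((p + m.+1 - q) %% m.+1)%N.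
Proof.
rewrite /= modnDmr addnBA //. by apply: ltnW.
Qed.

Lemma qmulE (x y : quat R) : x * y = qmul x y. Proof. by []. Qed.


Lemma quat_ext (x y : quat R) : q0 x = q0 y -> q1 x = q1 y -> q2 x = q2 y -> q3 x = q3 y -> x = y.
Proof. by case: x y => a b c d [e f g h] /= -> -> -> ->. Qed.
Lemma qaddE (x y : quat R) : x + y = qadd x y. Proof. by []. Qed.
Lemma q0D (x y : quat R) : q0 (x + y) = q0 x + q0 y. Proof. by []. Qed.
Lemma q1D (x y : quat R) : q1 (x + y) = q1 x + q1 y. Proof. by []. Qed.
Lemma q2D (x y : quat R) : q2 (x + y) = q2 x + q2 y. Proof. by []. Qed.
Lemma q3D (x y : quat R) : q3 (x + y) = q3 x + q3 y. Proof. by []. Qed.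
Lemma q0M (x y : quat R) : q0 (x * y) = q0 x * q0 y - q1 x * q1 y - q2 x * q2 y - q3 x * q3 y. Proof. by []. Qed.
Lemma q1M (x y : quat R) : q1 (x * y) = q0 x * q1 y + q1 x * q0 y + q2 x * q3 y - q3 x * q2 y. Proof. by []. Qed.
Lemma q2M (x y : quat R) : q2 (x * y) = q0 x * q2 y - q1 x * q3 y + q2 x * q0 y + q3 x * q1 y. Proof. by []. Qed.
Lemma q3M (x y : quat R) : q3 (x * y) = q0 x * q3 y + q1 x * q2 y - q2 x * q1 y + q3 x * q0 y. Proof. by []. Qed.
Lemma q00 : q0 (0 : quat R) = 0. Proof. by []. Qed.
Lemma q10 : q1 (0 : quat R) = 0. Proof. by []. Qed.
Lemma q20 : q2 (0 : quat R) = 0. Proof. by []. Qed.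
Lemma q30 : q3 (0 : quat R) = 0. Proof. by []. Qed.
Definition qE := (q0D, q1D, q2D, q3D, q0M, q1M, q2M, q3M, q00, q10, q20, q30).

Definition Jp (x : quat R) := qj R * qc x.

Ltac qsolve := apply: quat_ext; rewrite /Jp /qd /qc /qj /= ?qE /=; ring.

Lemma qdD x y : qd (x + y) = qd x + qd y :> quat R. Proof. qsolve. Qed.
Lemma qd0 : qd 0 = 0 :> quat R. Proof. qsolve. Qed.
Lemma JpD x y : Jp (x + y) = Jp x + Jp y :> quat R. Proof. qsolve. Qed.
Lemma Jp0 : Jp 0 = 0 :> quat R. Proof. qsolve. Qed.
Lemma qd_mix (u v y : quat R) : qd ((qd u + Jp v) * y) = qd u * qd y + Jp v * Jp y.
Proof. qsolve. Qed.
Lemma Jp_mix (u v y : quat R) : Jp ((qd u + Jp v) * y) = qd u * Jp y + Jp v * qd y.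
Proof. qsolve. Qed.

Lemma bcircE m n1 n2 (X : qtensor R n1 n2 m.+1) p i q l :
  bcirc X (mxvec_index p i) (mxvec_index q l) = X (p - q) i l.
Proof.
rewrite mxE !blk_mxvec /=; congr (X _ i l); apply: val_inj.
by rewrite val_insubd ltn_pmod // val_subZp.
Qed.

Lemma Pent m (q t : 'I_m.+1) : ((q : nat) == ((m.+1 - t) %% m.+1)%N) = (t == - q).
Proof.
have -> : ((m.+1 - t) %% m.+1)%N = val (- t) by [].
by rewrite val_eqE eq_sym eqr_oppLR.
Qed.

Lemma PkronE m n1 n2 (M : 'M[quat R]_(n1, m.+1 * n2)) r q l :
  (M *m kron (Pperm R m.+1) 1%:M) r (mxvec_index q l) = M r (mxvec_index (- q) l).
Proof.
rewrite mxE sum_blk (bigD1 (- q)) //= (bigD1 l) //=.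
rewrite !mxE !blk1 !blk2 Pent !eqxx mulr1n mul1r mulr1.
rewrite big1 ?addr0; last first.
  by move=> k /negbTE kl; rewrite !mxE !blk1 !blk2 kl mulr0n !mulr0.
rewrite big1 ?addr0 // => t /negbTE tq; rewrite big1 // => k _.
by rewrite !mxE !blk1 !blk2 Pent tq mulr0n mul0r mulr0.
Qed.

Lemma bcirc_zE m n1 n2 (A : qtensor R n1 n2 m.+1) p i q l :
  bcirc_z A (mxvec_index p i) (mxvec_index q l) = qd (A (p - q) i l) + Jp (A (p + q) i l).
Proof.
by rewrite /bcirc_z mxE bcircE [X in _ + X]mxE PkronE bcircE !ffunE !mxE opprK.
Qed.

Lemma sum_blk' m n (F : 'I_(m * n) -> quat R) :
  \sum_t F t = \sum_(x : 'I_m * 'I_n) F (mxvec_index x.1 x.2).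
Proof.
rewrite (reindex (fun pr : 'I_m * 'I_n => mxvec_index pr.1 pr.2)) //=.
by apply: onW_bij; exists (fun t => blk t) => [[i j]|t]; rewrite ?blk_mxvec // mxvec_blk.
Qed.

Lemma shift m n (c : 'I_m.+1) (F : 'I_m.+1 * 'I_n -> quat R) :
  \sum_x F x = \sum_x F ((x.1 + c)%R, x.2).
Proof.
rewrite (reindex_inj (h := fun x : 'I_m.+1 * 'I_n => ((x.1 + c)%R, x.2))) //.
move=> [a b] [a' b'] e; have e1 := congr1 fst e; have e2 := congr1 snd e; simpl in e1, e2; by rewrite (addIr c e1) e2.
Qed.

Lemma qtprodE m n1 n2 n4 (A : qtensor R n1 n2 m.+1) (B : qtensor R n2 n4 m.+1) s i l :
  qtprod A B s i l = \sum_(x : 'I_m.+1 * 'I_n2)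
     (qd (A (s - x.1) i x.2) + Jp (A (s + x.1) i x.2)) * B x.1 x.2 l.
Proof.
rewrite /qtprod /tfold ffunE !mxE sum_blk'; apply: eq_bigr => x _.
by rewrite bcirc_zE !mxE blk1 blk2.
Qed.

Lemma qd_sum I (r : seq I) (P : pred I) (F : I -> quat R) :
  qd (\sum_(i <- r | P i) F i) = \sum_(i <- r | P i) qd (F i).
Proof. exact: (big_morph _ qdD qd0). Qed.
Lemma Jp_sum I (r : seq I) (P : pred I) (F : I -> quat R) :
  Jp (\sum_(i <- r | P i) F i) = \sum_(i <- r | P i) Jp (F i).
Proof. exact: (big_morph _ JpD Jp0). Qed.

Lemma bcirc_zM m n (A B : qtensor R n n m.+1) :
  bcirc_z (qtprod A B) = bcirc_z A *m bcirc_z B.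
Proof.
apply: mx_blkP => p i q l.
rewrite bcirc_zE !qtprodE qd_sum Jp_sum mxE sum_blk'.
under eq_bigr do rewrite qd_mix.
under [X in _ + X]eq_bigr do rewrite Jp_mix.
under [RHS]eq_bigr do rewrite !bcirc_zE mulrDl !mulrDr.
rewrite !big_split /=.
have H (x1 x2 x3 x4 : quat R) : x1 + x2 + (x3 + x4) = x1 + x3 + (x4 + x2).
  by rewrite addrACA [x2 + x4]addrC.
rewrite H; congr (_ + _ + (_ + _)).
- rewrite [RHS](shift q); apply: eq_bigr => x _ /=.
  by rewrite addrK opprD addrA [p - x.1 - q]addrAC.
- rewrite [RHS](shift (- q)); apply: eq_bigr => x _ /=.
  by rewrite subrK opprB addrA.
- rewrite [RHS](shift q); apply: eq_bigr => x _ /=.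
  by rewrite addrK addrA [p + x.1 + q]addrAC.
- rewrite [RHS](shift (- q)); apply: eq_bigr => x _ /=.
  by rewrite subrK addrA [p + x.1 - q]addrAC.
Qed.

Lemma qd_nat (b : bool) : qd (b%:R : quat R) = b%:R.
Proof. by case: b; rewrite ?mulr1n ?mulr0n //; qsolve. Qed.
Lemma Jp_nat (b : bool) : Jp (b%:R : quat R) = 0.
Proof. by case: b; rewrite ?mulr1n ?mulr0n //; qsolve. Qed.

Lemma mxvec_eq m n (p q : 'I_m) (i l : 'I_n) :
  (mxvec_index p i == mxvec_index q l) = (p == q) && (i == l).
Proof.
rewrite -xpair_eqE; apply/eqP/eqP => [e|e].
  by have := congr1 (@blk _ _) e; rewrite !blk_mxvec.
by move: e => [] -> ->.
Qed.

Lemma bcirc_z_id m n : bcirc_z (qtid R n m.+1) = 1%:M.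
Proof.
apply: mx_blkP => p i q l.
have Hz (x : 'I_m.+1) : ((x : nat) == 0%N) = (x == 0) by rewrite -val_eqE.
rewrite bcirc_zE !ffunE !mxE mxvec_eq Hz subr_eq0.
have -> : Jp ((if (p + q : 'I_m.+1) == 0%N :> nat then 1%:M else 0) i l) = 0.
  by case: ifP; rewrite mxE ?Jp_nat // Jp0.
rewrite addr0; case: eqP => _ /=; first by rewrite mxE qd_nat.
by rewrite mxE qd0.
Qed.

Lemma mx0P n1 n2 (M N : 'M[quat R]_(0 * n1, 0 * n2)) : M = N.
Proof. by apply/matrixP => r c; have := ltn_ord (blk r).1; rewrite ltn0. Qed.
End S.

Theorem lemma3p4 (R : realType) (n n3 : nat) (A : qtensor R n n n3) :
  (forall k : nat, (0 < k)%N -> bcirc_z (qtpow A k) = bcirc_z A ^+ k) /\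
  (forall Ainv : qtensor R n n n3,
     qtprod A Ainv = qtid R n n3 -> qtprod Ainv A = qtid R n n3 ->
     bcirc_z A *m bcirc_z Ainv = 1%:M /\ bcirc_z Ainv *m bcirc_z A = 1%:M).
Proof.
case: n3 A => [|m] A.
  by split => [k _|B _ _]; [|split]; apply: mx0P.
split.
  case=> [|k] // _; rewrite /qtpow /=.
  elim: k => [|k IH]; first by rewrite expr1.
  by rewrite /= bcirc_zM IH [in RHS]exprS mulmxE.
move=> B H1 H2; split; by rewrite -bcirc_zM ?H1 ?H2 bcirc_z_id.
Qed.
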